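(* In the setting described in the context, the traces of the SLD quantum information matrices of the two schemes are $$\mathrm{tr}\{H^{(i)}_\theta\}=\frac4d\sum_{i=1}^{d-1}\sum_{j=1}^n\Bigl(\frac{\partial f_j(\theta_i)}{\partial\theta_i}\Bigr)^2,\qquad \mathrm{tr}\{H^{(ii)}_\theta\}=\frac4d\sum_{i=1}^{d-1}\Bigl(\sum_{j=1}^n\frac{\partial f_j(\theta_i)}{\partial\theta_i}\Bigr)^2.$$
   Context: Let $t_1,\dots,t_{d-1}$ be $d\times d$ matrices with $t_k=t_k^\dagger$, $\mathrm{tr}\{t_k\}=0$, $\mathrm{tr}\{t_kt_l\}=\delta_{kl}$ and $t_kt_l=t_lt_k$; let $\{|w_k\rangle\}_{k=1}^d$ be a common orthonormal eigenbasis and $|\psi_{sep}\rangle=\frac1{\sqrt d}\sum_{k=1}^d|w_k\rangle$. Let $f_1,\dots,f_n:\mathbb{R}\to\mathbb{R}$ be differentiable with $f_j'>0$ and $0\le\sum_jf_j(\theta_k)\le\pi$ for all $j,k$ and all $\theta$ in the parameter range. For $\theta=(\theta_1,\dots,\theta_{d-1})$ define $U^j_\theta=\exp\bigl(i\sum_{k=1}^{d-1}f_j(\theta_k)t_k\bigr)$, $j=1,\dots,n$. Scheme (i): each $U^j_\theta$ acts on its own copy of $|\psi_{sep}\rangle$, giving the product output state $\bigotimes_{j=1}^nU^j_\theta|\psi_{sep}\rangle$; scheme (ii): all channels act in sequence on one copy, giving $U^n_\theta\cdots U^1_\theta|\psi_{sep}\rangle$. $H^{(i)}_\theta$, $H^{(ii)}_\theta$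 denote the SLD quantum information matrices of the respective output families; for a pure family $|\psi_\theta\rangle$, $(H_\theta)_{mm'}=4\,\mathrm{Re}[\langle\partial_m\psi|\partial_{m'}\psi\rangle-\langle\partial_m\psi|\psi\rangle\langle\psi|\partial_{m'}\psi\rangle]$. *)

(* Defs.v *)
From HB Require Import structures.
From mathcomp Require Import all_boot all_order all_algebra.
From mathcomp Require Import all_classical all_reals all_analysis.
From mathcomp Require Import complex.
Set Implicit Arguments. Unset Strict Implicit. Unset Printing Implicit Defensive.
Import Order.TTheory GRing.Theory Num.Theory.
Import numFieldNormedType.Exports.
Local Open Scope ring_scope.


Definition adjmx {R : realType} (m n : nat) (A : 'M[R[i]]_(m, n)) : 'M[R[i]]_(n, m) :=
  map_mx (@conjc R) A^T.

Definition mxexp_partial {R : realType} (d : nat) (A : 'M[R[i]]_d) (N : nat) : 'M[R[i]]_d :=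
  \sum_(k < N) ((k`!)%:R)^-1 *: (A ^+ k).

Definition mxexp {R : realType} (d : nat) (A : 'M[R[i]]_d) : 'M[R[i]]_d :=
  \matrix_(a, b) Complex
     (limn (fun N => (complex.Re (mxexp_partial A N a b) : R)))
     (limn (fun N => (complex.Im (mxexp_partial A N a b) : R))).

Definition braket {R : realType} (I : finType) (u v : I -> R[i]) : R[i] :=
  \sum_(x : I) conjc (u x) * v x.

Definition shift {R : realType} (p : nat) (theta : 'rV[R]_p) (m : 'I_p) (s : R) : 'rV[R]_p :=
  \row_k (theta 0 k + (if k == m then s else 0)).

Definition pderiv {R : realType} (p : nat) (I : finType) (psi : 'rV[R]_p -> I -> R[i])
    (theta : 'rV[R]_p) (m : 'I_p) : I -> R[i] :=
  fun x => Complex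
    (derive1 (fun s : R => (complex.Re (psi (shift theta m s) x) : R)) 0)
    (derive1 (fun s : R => (complex.Im (psi (shift theta m s) x) : R)) 0).

Definition sld_qfi {R : realType} (p : nat) (I : finType) (psi : 'rV[R]_p -> I -> R[i])
    (theta : 'rV[R]_p) : 'M[R]_p :=
  \matrix_(m, m')
    (4 * complex.Re (braket (pderiv psi theta m) (pderiv psi theta m')
        - braket (pderiv psi theta m) (psi theta)
          * braket (psi theta) (pderiv psi theta m'))).

Definition chanU {R : realType} (d : nat) (t : 'I_(d.-1) -> 'M[R[i]]_d) (fj : R -> R)
    (theta : 'rV[R]_(d.-1)) : 'M[R[i]]_d :=
  mxexp ((Complex 0 1) *: \sum_(k < d.-1) (real_complex R (fj (theta 0 k))) *: t k).

Definition psi_sep {R : realType} (d : nat) (w : 'I_d -> 'cV[R[i]]_d) : 'cV[R[i]]_d :=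
  real_complex R (Num.sqrt (d%:R : R))^-1 *: \sum_(a < d) w a.

(* scheme (i): product state  (x) _j U^j |psi_sep>, indexed by 'I_n -> 'I_d *)
Definition out_parallel {R : realType} (d n : nat) (t : 'I_(d.-1) -> 'M[R[i]]_d)
    (f : 'I_n -> R -> R) (w : 'I_d -> 'cV[R[i]]_d)
    (theta : 'rV[R]_(d.-1)) : {ffun 'I_n -> 'I_d} -> R[i] :=
  fun x => \prod_(j < n) ((chanU t (f j) theta *m psi_sep w) (x j) 0).

Definition out_sequential {R : realType} (d n : nat) (t : 'I_(d.-1) -> 'M[R[i]]_d)
    (f : 'I_n -> R -> R) (w : 'I_d -> 'cV[R[i]]_d)
    (theta : 'rV[R]_(d.-1)) : 'I_d -> R[i] :=
  fun a => ((\prod_(j < n) chanU t (f (rev_ord j)) theta) *m psi_sep w) a 0.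

(* Main.v *)
Require Import Defs.
From HB Require Import structures.
From mathcomp Require Import all_boot all_order all_algebra.
From mathcomp Require Import all_classical all_reals all_analysis.
From mathcomp Require Import complex.
From mathcomp Require Import ring.
Import Order.TTheory GRing.Theory Num.Theory.
Import numFieldNormedType.Exports.
Local Open Scope ring_scope.
Local Open Scope complex_scope.
Local Open Scope classical_set_scope.
From mathcomp Require Import lra.

Section S.
Variable R : realType.
Local Notation Re := (@complex.Re R).
Local Notation Im := (@complex.Im R).
Local Notation C := R[i].

Lemma cReM (z w : C) : Re (z * w) = Re z * Re w - Im z * Im w.
Proof. by case: z => a b; case: w => c e; simpc. Qed.
Lemma cImM (z w : C) : Im (z * w) = Re z * Im w + Im z * Re w.
Proof. by case: z => a b; case: w => c e; simpc; rewrite addrC. Qed.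
Lemma cReD (z w : C) : Re (z + w) = Re z + Re w.
Proof. by case: z => a b; case: w => c e. Qed.
Lemma cImD (z w : C) : Im (z + w) = Im z + Im w.
Proof. by case: z => a b; case: w => c e. Qed.
Lemma cReN (z : C) : Re (- z) = - Re z.
Proof. by case: z. Qed.
Lemma cImN (z : C) : Im (- z) = - Im z.
Proof. by case: z. Qed.
Lemma cRe_sum (I : Type) (r : seq I) (F : I -> C) :
  Re (\sum_(i <- r) F i) = \sum_(i <- r) Re (F i).
Proof. by elim: r => [|a r ih]; rewrite ?big_nil // !big_cons cReD ih. Qed.
Lemma cIm_sum (I : Type) (r : seq I) (F : I -> C) :
  Im (\sum_(i <- r) F i) = \sum_(i <- r) Im (F i).
Proof. by elim: r => [|a r ih]; rewrite ?big_nil // !big_cons cImD ih. Qed.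
Lemma cReRM (r : R) (z : C) : Re (r%:C * z) = r * Re z.
Proof. by rewrite cReM /= mul0r subr0. Qed.
Lemma cImRM (r : R) (z : C) : Im (r%:C * z) = r * Im z.
Proof. by rewrite cImM /= mul0r addr0. Qed.

Definition ce (p : R) : C := Complex (cos p) (sin p).

Lemma ce_norm p : conjc (ce p) * ce p = 1.
Proof.
rewrite /ce; simpc; apply/eqP; rewrite eq_complex /= -!expr2 cos2Dsin2 eqxx /=.
by rewrite mulrC subrr.
Qed.

Definition ccvg (u : nat -> C) (l : C) :=
  (fun N => Re (u N)) @ \oo --> Re l /\ (fun N => Im (u N)) @ \oo --> Im l.

Lemma ccvg_ext u v l : (forall N, u N = v N) -> ccvg u l -> ccvg v l.
Proof. by move=> e; have -> : u = v by apply/funext. Qed.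

Lemma ccvgD u v l m : ccvg u l -> ccvg v m -> ccvg (fun N => u N + v N) (l + m).
Proof.
move=> [a b] [c e]; split.
  rewrite cReD; under eq_fun do rewrite cReD; exact: cvgD.
rewrite cImD; under eq_fun do rewrite cImD; exact: cvgD.
Qed.

Lemma ccvg_cst0 : ccvg (fun _ => 0) 0.
Proof. by split; apply: cvg_cst. Qed.

Lemma ccvg_sum (I : Type) (r : seq I) (F : I -> nat -> C) (L : I -> C) :
  (forall i, ccvg (F i) (L i)) ->
  ccvg (fun N => \sum_(i <- r) F i N) (\sum_(i <- r) L i).
Proof.
move=> h; elim: r => [|a r ih].
  rewrite big_nil; apply: (@ccvg_ext (fun _ => 0)) => [N|]; first by rewrite big_nil.
  exact: ccvg_cst0.
rewrite big_cons; apply: (@ccvg_ext (fun N => F a N + \sum_(i <- r) F i N)).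
  by move=> N; rewrite big_cons.
exact: ccvgD.
Qed.

Lemma ccvgMl (c : C) u l : ccvg u l -> ccvg (fun N => c * u N) (c * l).
Proof.
move=> [a b]; split.
  rewrite cReM; under eq_fun do rewrite cReM.
  by apply: cvgB; apply: cvgM => //; apply: cvg_cst.
rewrite cImM; under eq_fun do rewrite cImM.
by apply: cvgD; apply: cvgM => //; apply: cvg_cst.
Qed.

Lemma ccvgMr (c : C) u l : ccvg u l -> ccvg (fun N => u N * c) (l * c).
Proof.
move=> h; rewrite mulrC; apply: (@ccvg_ext (fun N => c * u N)).
  by move=> N; rewrite mulrC.
exact: ccvgMl.
Qed.

Lemma ccvg_lim u l : ccvg u l ->
  Complex (limn (fun N => Re (u N))) (limn (fun N => Im (u N))) = l.
Proof.
move=> [a b]; rewrite (cvg_lim _ a) ?(cvg_lim _ b) //; by case: l a b.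
Qed.

Lemma i_even m : 'i%C ^+ (m.*2) = (-1) ^+ m :> C.
Proof. by rewrite -mul2n exprM sqr_i. Qed.
Lemma i_odd m : 'i%C ^+ (m.*2.+1) = (-1) ^+ m * 'i%C :> C.
Proof. by rewrite exprS i_even mulrC. Qed.

Lemma Re_iX k : Re ('i%C ^+ k : C) = (~~ odd k)%:R * (-1) ^+ k./2.
Proof.
have rX m : ((-1) ^+ m : C) = ((-1) ^+ m : R)%:C by rewrite rmorphXn rmorphN rmorph1.
case ok: (odd k) => /=.
  have ek : k = (k./2).*2.+1 by rewrite -[LHS]odd_double_half ok add1n.
  by rewrite {1}ek i_odd rX cReRM /= mulr0 mul0r.
have ek : k = (k./2).*2 by rewrite -[LHS]odd_double_half ok add0n.
by rewrite {1}ek i_even rX /= mul1r.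
Qed.

Lemma Im_iX k : Im ('i%C ^+ k : C) = (odd k)%:R * (-1) ^+ k.-1./2.
Proof.
have rX m : ((-1) ^+ m : C) = ((-1) ^+ m : R)%:C by rewrite rmorphXn rmorphN rmorph1.
case ok: (odd k) => /=.
  have ek : k = (k./2).*2.+1 by rewrite -[LHS]odd_double_half ok add1n.
  have -> : k.-1./2 = k./2 by rewrite {1}ek /= doubleK.
  by rewrite {1}ek i_odd rX cImRM /= mulr1 mul1r.
have ek : k = (k./2).*2 by rewrite -[LHS]odd_double_half ok add0n.
by rewrite {1}ek i_even rX /= mul0r.
Qed.

Lemma ccvg_exp (p : R) :
  ccvg (fun N => \sum_(k < N) ((k`!)%:R)^-1 * ('i%C * p%:C) ^+ k) (ce p).
Proof.
have term k : ((k`!)%:R : C)^-1 * ('i%C * p%:C) ^+ k =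
    ((k`!)%:R^-1 * p ^+ k)%:C * 'i%C ^+ k.
  rewrite exprMn rmorphM rmorphXn fmorphV rmorph_nat.
  ring.
have hre : (fun N => Re (\sum_(k < N) ((k`!)%:R)^-1 * ('i%C * p%:C) ^+ k))
    = series (cos_coeff p).
  apply/funext => N; rewrite cRe_sum /series /= big_mkord; apply: eq_bigr => k _.
  by rewrite term cReRM Re_iX /cos_coeff /= -?exprnP; ring.
have him : (fun N => Im (\sum_(k < N) ((k`!)%:R)^-1 * ('i%C * p%:C) ^+ k))
    = series (sin_coeff p).
  apply/funext => N; rewrite cIm_sum /series /= big_mkord; apply: eq_bigr => k _.
  by rewrite term cImRM Im_iX /sin_coeff /= -?exprnP; ring.
rewrite /ccvg hre him /ce /=; split.
  by rewrite unlock; exact: is_cvg_series_cos_coeff.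
by rewrite unlock; exact: is_cvg_series_sin_coeff.
Qed.
End S.

Section S2.
Variable R : realType.
Local Notation Re := (@complex.Re R).
Local Notation Im := (@complex.Im R).
Local Notation C := R[i].
Local Notation ce := (@ce R).

Definition cder (g : R -> C) (g' : C) :=
  is_derive (0:R) (1:R) (fun s => Re (g s)) (Re g') /\
  is_derive (0:R) (1:R) (fun s => Im (g s)) (Im g').

Lemma cder_ext g h g' : (forall s, g s = h s) -> cder g g' -> cder h g'.
Proof. by move=> e; have -> : g = h by apply/funext. Qed.

Lemma cder_eqv g a b : cder g a -> a = b -> cder g b.
Proof. by move=> ? <-. Qed.

Lemma cder_cst (c : C) : cder (fun _ => c) 0.
Proof. by split; apply: is_derive_cst. Qed.

Lemma cder_add g h g' h' : cder g g' -> cder h h' ->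
  cder (fun s => g s + h s) (g' + h').
Proof.
move=> [a b] [c e]; split.
  have -> : (fun s => Re (g s + h s)) = (fun s => Re (g s)) + (fun s => Re (h s)).
    by apply/funext => s /=; rewrite cReD.
  by rewrite cReD; apply: is_deriveD.
have -> : (fun s => Im (g s + h s)) = (fun s => Im (g s)) + (fun s => Im (h s)).
  by apply/funext => s /=; rewrite cImD.
by rewrite cImD; apply: is_deriveD.
Qed.

Lemma cder_mul g h g' h' : cder g g' -> cder h h' ->
  cder (fun s => g s * h s) (g' * h 0 + g 0 * h').
Proof.
move=> [a b] [c e]; split.
  have H := is_deriveB (is_deriveM a c) (is_deriveM b e).
  have -> : (fun s => Re (g s * h s)) = (fun s => Re (g s)) * (fun s => Re (h s))
      - (fun s => Im (g s)) * (fun s => Im (h s)).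
    by apply/funext => s /=; rewrite cReM.
  apply: (is_derive_eq H).
  rewrite /= cReD !cReM /GRing.scale /=; ring.
have H := is_deriveD (is_deriveM a e) (is_deriveM b c).
have -> : (fun s => Im (g s * h s)) = (fun s => Re (g s)) * (fun s => Im (h s))
    + (fun s => Im (g s)) * (fun s => Re (h s)).
  by apply/funext => s /=; rewrite cImM.
apply: (is_derive_eq H).
rewrite /= cImD !cImM /GRing.scale /=; ring.
Qed.

Lemma cder_sum (I : Type) (r : seq I) (g : I -> R -> C) (g' : I -> C) :
  (forall i, cder (g i) (g' i)) ->
  cder (fun s => \sum_(i <- r) g i s) (\sum_(i <- r) g' i).
Proof.
move=> h; elim: r => [|a r ih].
  rewrite big_nil; apply: (@cder_ext (fun _ => 0)); last exact: cder_cst.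
  by move=> s; rewrite big_nil.
rewrite big_cons; apply: (@cder_ext (fun s => g a s + \sum_(i <- r) g i s)).
  by move=> s; rewrite big_cons.
exact: cder_add.
Qed.

Lemma cder_prod n (g : 'I_n -> R -> C) (g' : 'I_n -> C) :
  (forall j, cder (g j) (g' j)) ->
  cder (fun s => \prod_(j < n) g j s)
       (\sum_(j < n) \prod_(j' < n) (if j' == j then g' j' else g j' 0)).
Proof.
elim: n g g' => [|n ih] g g' h.
  rewrite big_ord0; apply: (@cder_ext (fun _ => 1)); last exact: cder_cst.
  by move=> s; rewrite big_ord0.
apply: (@cder_ext (fun s => (\prod_(j < n) g (widen_ord (leqnSn n) j) s) * g ord_max s)).
  by move=> s; rewrite big_ord_recr.
apply: cder_eqv; first by apply: cder_mul; [apply: ih => j; apply: h | apply: h].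
rewrite big_ord_recr /= big_distrl /=; congr (_ + _).
  apply: eq_bigr => j _; rewrite big_ord_recr /=.
  have -> : (ord_max == widen_ord (leqnSn n) j) = false.
    by apply/negbTE; rewrite neq_ltn /= ltn_ord orbT.
  congr (_ * _); apply: eq_bigr => j' _.
rewrite big_ord_recr /= eqxx; congr (_ * _); apply: eq_bigr => j' _.
have -> : (widen_ord (leqnSn n) j' == ord_max) = false.
  by apply/negbTE; rewrite neq_ltn /= ltn_ord.
by [].
Qed.

Lemma is_derive_chain (f g : R -> R) (x df dg : R) :
  is_derive x 1 f df -> is_derive (f x) 1 g dg -> is_derive x 1 (g \o f) (dg * df).
Proof.
move=> hf hg; apply: DeriveDef.
  apply/derivable1_diffP; apply: differentiable_comp; apply/derivable1_diffP.
    exact: ex_derive.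
  exact: ex_derive.
rewrite -derive1E derive1_comp; try exact: ex_derive.
by rewrite !derive1E !derive_val.
Qed.

Lemma cder_ce (phi : R -> R) dphi : is_derive (0:R) (1:R) phi dphi ->
  cder (fun s => ce (phi s)) ('i%C * dphi%:C * ce (phi 0)).
Proof.
move=> hp; split; rewrite /ce /=.
  apply: (is_derive_eq (is_derive_chain _ _ _ _ _ hp (is_derive_cos _))).
  simpc; rewrite /=; ring.
apply: (is_derive_eq (is_derive_chain _ _ _ _ _ hp (is_derive_sin _))).
simpc; rewrite /=; ring.
Qed.

Lemma is_derive_at (f : R -> R) (x : R) : derivable f x 1 ->
  is_derive (0:R) (1:R) (fun s => f (x + s)) (f^`() x).
Proof.
move=> df.
have h1 : is_derive (0:R) (1:R) (fun s : R => s + x) 1 by exact: is_derive_shift.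
have h2 : is_derive ((fun s : R => s + x) 0) 1 f (f^`() x).
  by rewrite /= add0r derive1E; apply: derivableP.
have := is_derive_chain _ _ _ _ _ h1 h2.
have -> : f \o (fun s => s + x) = (fun s => f (x + s)).
  by apply/funext => s; rewrite /= addrC.
by rewrite mulr1.
Qed.

Lemma pderiv_cder (p : nat) (I : finType) (psi : 'rV[R]_p -> I -> C) theta m
  (D : I -> C) : (forall x, cder (fun s => psi (Defs.shift theta m s) x) (D x)) ->
  pderiv psi theta m = D.
Proof.
move=> h; apply/funext => x; rewrite /pderiv; have [h1 h2] := h x.
by rewrite !derive1E !derive_val; case: (D x).
Qed.

Lemma shiftm0 (p : nat) (theta : 'rV[R]_p) m : Defs.shift theta m 0 = theta.
Proof. by apply/rowP => k; rewrite mxE if_same addr0. Qed.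

End S2.

Section LA.
Variable R : realType.
Local Notation Re := (@complex.Re R).
Local Notation Im := (@complex.Im R).
Local Notation C := R[i].
Local Notation ce := (@ce R).
Variable d : nat.
Variable w : 'I_d -> 'cV[C]_d.

Definition Wm : 'M[C]_d := \matrix_(y, a) w a y 0.
Definition Vm : 'M[C]_d := adjmx Wm.

Lemma VmE a y : Vm a y = conjc (Wm y a).
Proof. by rewrite /Vm /adjmx !mxE. Qed.

Lemma ent3 (X : 'M[C]_d) (D : 'rV[C]_d) y b :
  (Wm *m diag_mx D *m X) y b = \sum_a Wm y a * D 0 a * X a b.
Proof. by rewrite mul_mx_diag !mxE; apply: eq_bigr => a _; rewrite mxE. Qed.

Hypothesis hon : forall a b, braket (fun r => w a r 0) (fun r => w b r 0) = (a == b)%:R.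

Lemma VW : Vm *m Wm = 1%:M.
Proof.
apply/matrixP => a b; rewrite !mxE -hon /braket; apply: eq_bigr => y _.
by rewrite VmE !mxE.
Qed.

Lemma WV : Wm *m Vm = 1%:M.
Proof. exact: mulmx1C VW. Qed.

Lemma diagM (D1 D2 : 'rV[C]_d) :
  diag_mx D1 *m diag_mx D2 = diag_mx (\row_a (D1 0 a * D2 0 a)).
Proof.
apply/matrixP => i j; rewrite mul_diag_mx !mxE.
by case: (i == j) => /=; rewrite ?mulr1n ?mulr0n ?mulr0.
Qed.

Lemma WDV_mul (D1 D2 : 'rV[C]_d) :
  (Wm *m diag_mx D1 *m Vm) *m (Wm *m diag_mx D2 *m Vm)
  = Wm *m diag_mx (\row_a (D1 0 a * D2 0 a)) *m Vm.
Proof.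
rewrite -!mulmxA [Vm *m _]mulmxA VW mul1mx [diag_mx D1 *m _]mulmxA diagM.
by [].
Qed.

Lemma trWXV X : \tr (Wm *m X *m Vm) = \tr X.
Proof. by rewrite mxtrace_mulC mulmxA VW mul1mx. Qed.

Lemma diag1 : diag_mx (\row_(a < d) (1 : C)) = 1%:M.
Proof. by apply/matrixP => i j; rewrite !mxE. Qed.

Lemma powWDV (D : 'rV[C]_d) k :
  (Wm *m diag_mx D *m Vm) ^+ k = Wm *m diag_mx (\row_a D 0 a ^+ k) *m Vm.
Proof.
elim: k => [|k ih].
  have -> : \row_a D 0 a ^+ 0 = \row_(a < d) (1 : C) by apply/rowP => a; rewrite !mxE.
  by rewrite expr0 diag1 mulmx1 WV idmxE.
rewrite exprS -mulmxE ih WDV_mul.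
have -> : \row_a (D 0 a * (\row_a0 D 0 a0 ^+ k) 0 a) = \row_a D 0 a ^+ k.+1.
  by apply/rowP => a; rewrite !mxE exprS.
by [].
Qed.

Lemma partialWDV (D : 'rV[C]_d) N :
  mxexp_partial (Wm *m diag_mx D *m Vm) N
  = Wm *m diag_mx (\row_a \sum_(k < N) ((k`!)%:R)^-1 * D 0 a ^+ k) *m Vm.
Proof.
apply/matrixP => y b; rewrite /mxexp_partial summxE ent3.
under eq_bigr do rewrite mxE powWDV ent3 big_distrr.
rewrite exchange_big /=; apply: eq_bigr => a _.
rewrite mxE big_distrr big_distrl /=; apply: eq_bigr => k _.
by rewrite mxE; ring.
Qed.

Lemma mxexpWDV (ph : 'I_d -> R) :
  mxexp (Wm *m diag_mx (\row_a ('i%C * (ph a)%:C)) *m Vm)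
  = Wm *m diag_mx (\row_a ce (ph a)) *m Vm.
Proof.
apply/matrixP => y b; rewrite /mxexp mxE.
apply: ccvg_lim; rewrite ent3.
apply: (@ccvg_ext R (fun N => \sum_a Wm y a *
     (\sum_(k < N) ((k`!)%:R)^-1 * ('i%C * (ph a)%:C) ^+ k) * Vm a b)).
  by move=> N; rewrite partialWDV ent3; apply: eq_bigr => a _; rewrite !mxE.
apply: ccvg_sum => a; rewrite mxE; apply: ccvgMr; apply: ccvgMl.
exact: ccvg_exp.
Qed.

Lemma mxexp_act (A : 'M[C]_d) (ph : 'I_d -> R) :
  A *m Wm = Wm *m diag_mx (\row_a ('i%C * (ph a)%:C)) ->
  forall a, mxexp A *m w a = ce (ph a) *: w a.
Proof.
move=> hA a.
have -> : A = Wm *m diag_mx (\row_a ('i%C * (ph a)%:C)) *m Vm.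
  by rewrite -hA -mulmxA WV mulmx1.
rewrite mxexpWDV.
have hE : Wm *m diag_mx (\row_a ce (ph a)) *m Vm *m Wm = Wm *m diag_mx (\row_a ce (ph a)).
  by rewrite -mulmxA VW mulmx1.
apply/matrixP => y z; rewrite (ord1 z).
transitivity ((Wm *m diag_mx (\row_a ce (ph a)) *m Vm *m Wm) y a).
  by rewrite [LHS]mxE [RHS]mxE; apply: eq_bigr => b _; rewrite [Wm b a]mxE.
by rewrite hE mul_mx_diag !mxE mulrC.
Qed.

End LA.

Section EIG.
Variable R : realType.
Local Notation Re := (@complex.Re R).
Local Notation Im := (@complex.Im R).
Local Notation C := R[i].
Local Notation ce := (@ce R).
Variable d : nat.
Variable t : 'I_(d.-1) -> 'M[C]_d.
Variable w : 'I_d -> 'cV[C]_d.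
Local Notation Wm := (@Wm R d w).
Local Notation Vm := (@Vm R d w).
Hypothesis hherm : forall k, adjmx (t k) = t k.
Hypothesis htr0 : forall k, \tr (t k) = 0.
Hypothesis htr : forall k l, \tr (t k *m t l) = (k == l)%:R.
Hypothesis hon : forall a b, braket (fun r => w a r 0) (fun r => w b r 0) = (a == b)%:R.
Hypothesis heig : forall k a, exists lam : C, t k *m w a = lam *: w a.

Lemma braketZr (I : finType) (u v : I -> C) c :
  braket u (fun r => c * v r) = c * braket u v.
Proof. by rewrite /braket big_distrr; apply: eq_bigr => r _; rewrite mulrCA. Qed.

Lemma cjM (x y : C) : conjc (x * y) = conjc x * conjc y.
Proof. by case: x => a b; case: y => c e; simpc. Qed.
Lemma cjD (x y : C) : conjc (x + y) = conjc x + conjc y.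
Proof. by case: x => a b; case: y => c e; simpc. Qed.
Lemma cj0 : conjc (0 : C) = 0.
Proof. by rewrite /= oppr0. Qed.
Lemma cj_sum (I : Type) (r : seq I) (F : I -> C) :
  conjc (\sum_(i <- r) F i) = \sum_(i <- r) conjc (F i).
Proof. by elim: r => [|x r ih]; rewrite ?big_nil ?cj0 // !big_cons cjD ih. Qed.

Definition lamc k a := braket (fun r => w a r 0) (fun r => (t k *m w a) r 0).

Lemma eigE k a : t k *m w a = lamc k a *: w a.
Proof.
have [lam hl] := heig k a; rewrite /lamc hl.
have -> : (fun r => (lam *: w a) r 0) = (fun r => lam * w a r 0).
  by apply/funext => r; rewrite mxE.
by rewrite braketZr hon eqxx mulr1.
Qed.

Lemma lam_conj k a : conjc (lamc k a) = lamc k a.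
Proof.
have ht y s : conjc (t k y s) = t k s y by rewrite -{2}(hherm k) /adjmx !mxE.
rewrite /lamc /braket cj_sum.
under eq_bigr do rewrite mxE cjM conjcK cj_sum big_distrr.
under [RHS]eq_bigr do rewrite mxE big_distrr.
rewrite exchange_big /=; apply: eq_bigr => s _; apply: eq_bigr => y _.
by rewrite cjM ht; ring.
Qed.

Definition mu k a := Re (lamc k a).

Lemma lamR k a : lamc k a = (mu k a)%:C.
Proof.
rewrite /mu; move: (lam_conj k a); case: (lamc k a) => x y /= [] e.
have -> : y = 0 by lra.
by [].
Qed.

Lemma tW k : t k *m Wm = Wm *m diag_mx (\row_a lamc k a).
Proof.
apply/matrixP => y a.
transitivity ((t k *m w a) y 0).
  by rewrite [LHS]mxE [RHS]mxE; apply: eq_bigr => b _; rewrite [Wm _ _]mxE.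
by rewrite eigE mul_mx_diag !mxE mulrC.
Qed.

Lemma tWDV k : t k = Wm *m diag_mx (\row_a lamc k a) *m Vm.
Proof. by rewrite -tW -mulmxA (@WV _ _ _ hon) mulmx1. Qed.

Lemma mu_sum0 k : \sum_a mu k a = 0.
Proof.
have := htr0 k; rewrite tWDV (@trWXV _ _ _ hon) mxtrace_diag.
under eq_bigr do rewrite mxE lamR.
by rewrite -rmorph_sum => -[].
Qed.

Lemma mu_sum1 k : \sum_a mu k a ^+ 2 = 1.
Proof.
have := htr k k; rewrite eqxx tWDV (@WDV_mul _ _ _ hon) (@trWXV _ _ _ hon) mxtrace_diag.
under eq_bigr do rewrite !mxE lamR -rmorphM -expr2.
by rewrite -rmorph_sum => -[].
Qed.

Lemma AW (F : 'I_(d.-1) -> R) :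
  ('i%C *: \sum_k (F k)%:C *: t k) *m Wm
  = Wm *m diag_mx (\row_a ('i%C * (\sum_k F k * mu k a)%:C)).
Proof.
apply/matrixP => y a.
rewrite -scalemxAl mulmx_suml mul_mx_diag !mxE summxE rmorph_sum !big_distrr.
apply: eq_bigr => k _.
rewrite -scalemxAl mxE tW mul_mx_diag !mxE lamR rmorphM.
have E (p q r s : C) : p * (q * (r * s)) = r * (p * (q * s)) by ring.
exact: E.
Qed.


Lemma chanU_act (fj : R -> R) (theta : 'rV[R]_(d.-1)) a :
  chanU t fj theta *m w a = ce (\sum_k fj (theta 0 k) * mu k a) *: w a.
Proof.
rewrite /chanU; apply: (@mxexp_act _ _ _ hon _ (fun a => \sum_k fj (theta 0 k) * mu k a)).
exact: (AW (fun k => fj (theta 0 k))).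
Qed.

End EIG.

Section QFI.
Variable R : realType.
Local Notation Re := (@complex.Re R).
Local Notation Im := (@complex.Im R).
Local Notation C := R[i].
Local Notation ce := (@ce R).
Local Notation cder := (@cder R).

Lemma phi_der (p : nat) (fj : R -> R) (hf : forall x, derivable fj x 1)
  (theta : 'rV[R]_p) (m : 'I_p) (c : 'I_p -> R) :
  is_derive (0:R) (1:R) (fun s => \sum_k fj (Defs.shift theta m s 0 k) * c k)
    (derive1 fj (theta 0 m) * c m).
Proof.
have H := @is_derive_sum _ _ _ p (fun k s => c k * fj (theta 0 k + (if k == m then s else 0)))
   0 1 (fun k => if k == m then c k * derive1 fj (theta 0 m) else 0).
rewrite fct_sumE in H.
have -> : (fun s => \sum_k fj (Defs.shift theta m s 0 k) * c k) =
   (fun s => \sum_k c k * fj (theta 0 k + (if k == m then s else 0))).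
  by apply/funext => s; apply: eq_bigr => k _; rewrite mxE mulrC.
apply: is_derive_eq; first apply: H.
  move=> k; case: eqP => [->|_].
    have := is_deriveZ (c m) (@is_derive_at R _ _ (hf (theta 0 m))).
    by rewrite /GRing.scale /=.
  have -> : (fun s => c k * fj (theta 0 k + 0)) = cst (c k * fj (theta 0 k + 0)) by [].
  exact: is_derive_cst.
rewrite (bigD1 m) //= eqxx big1 ?addr0; first by rewrite mulrC.
by move=> k /negbTE ->.
Qed.

Variable d : nat.
Variable w : 'I_d -> 'cV[C]_d.
Hypothesis hon : forall a b, braket (fun r => w a r 0) (fun r => w b r 0) = (a == b)%:R.

Lemma hab a b (x yv : C) :
  \sum_r x * conjc (w a r 0) * (yv * w b r 0) = x * yv * (a == b)%:R.
Proof.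
rewrite -hon /braket big_distrr; apply: eq_bigr => r _ /=.
have E (p q u v : C) : p * q * (u * v) = p * u * (q * v) by ring.
exact: E.
Qed.

Lemma braketW (al be : 'I_d -> C) :
  braket (fun y => \sum_a al a * w a y 0) (fun y => \sum_b be b * w b y 0)
  = \sum_a conjc (al a) * be a.
Proof.
rewrite /braket.
under eq_bigr do rewrite cj_sum big_distrl /=.
under eq_bigr do under eq_bigr do rewrite cjM big_distrr /=.
rewrite exchange_big; apply: eq_bigr => a _ /=.
rewrite exchange_big /=.
under eq_bigr do rewrite hab.
rewrite (bigD1 a) //= eqxx mulr1 big1 ?addr0 // => b /negbTE.
by rewrite eq_sym => ->; rewrite mulr0.
Qed.

Definition cn : C := ((Num.sqrt (d%:R : R))^-1)%:C.

Lemma cn_norm : (0 < d)%N -> conjc cn * cn = ((d%:R : R)^-1)%:C.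
Proof.
move=> d0; rewrite /cn conjc_real -rmorphM; congr (_%:C).
by rewrite -invfM -expr2 sqr_sqrtr // ler0n.
Qed.

Lemma psi_state (M : 'M[C]_d) (ga : 'I_d -> C) :
  (forall a, M *m w a = ga a *: w a) ->
  forall y, (M *m psi_sep w) y 0 = \sum_a (cn * ga a) * w a y 0.
Proof.
move=> h y; rewrite /psi_sep -scalemxAr mulmx_sumr mxE summxE big_distrr.
apply: eq_bigr => a _; rewrite h mxE.
have E (p q u : C) : p * (q * u) = p * q * u by rewrite mulrA.
exact: E.
Qed.

Lemma cj_i : conjc ('i%C : C) = - 'i%C.
Proof. by apply/eqP; rewrite eq_complex /= oppr0 !eqxx. Qed.

Lemma state_facts (al : 'I_d -> C) (g : 'I_d -> R) (G : R) :
  (0 < d)%N ->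
  (forall a, conjc (al a) * al a = ((d%:R : R)^-1)%:C) ->
  \sum_a g a = 0 -> \sum_a g a ^+ 2 = G ^+ 2 ->
  [/\ \sum_a conjc (al a) * al a = 1,
      \sum_a conjc ('i%C * (g a)%:C * al a) * al a = 0 &
      \sum_a conjc ('i%C * (g a)%:C * al a) * ('i%C * (g a)%:C * al a)
        = (G ^+ 2 / d%:R)%:C].
Proof.
move=> d0 hal hg hg2; split.
- under eq_bigr do rewrite hal.
  rewrite sumr_const card_ord -rmorphMn; congr (_%:C).
  by rewrite -mulr_natr mulVf // pnatr_eq0 -lt0n.
- have E a : conjc ('i%C * (g a)%:C * al a) * al a
      = - 'i%C * ((d%:R : R)^-1)%:C * (g a)%:C.
    rewrite !cjM cj_i conjc_real -mulrA hal; ring.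
  under eq_bigr do rewrite E.
  by rewrite -big_distrr /= -rmorph_sum hg mulr0.
- have E a : conjc ('i%C * (g a)%:C * al a) * ('i%C * (g a)%:C * al a)
      = (g a ^+ 2 / d%:R)%:C.
    rewrite !cjM cj_i conjc_real.
    have -> : - 'i%C * (g a)%:C * conjc (al a) * ('i%C * (g a)%:C * al a)
       = - ('i%C * 'i%C) * ((g a)%:C * (g a)%:C) * (conjc (al a) * al a) by ring.
    rewrite hal -expr2 sqr_i opprK mul1r -rmorphM -rmorphM; congr (_%:C); ring.
  under eq_bigr do rewrite E.
  by rewrite -rmorph_sum -mulr_suml hg2.
Qed.

End QFI.

Arguments chanU_act {R d t w}.
Arguments mu_sum0 {R d t w}.
Arguments mu_sum1 {R d t w}.
Arguments psi_state {R d w M ga}.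
Arguments state_facts {R d al g G}.
Arguments braketW {R d w}.
Arguments cn_norm {R d}.
Arguments phi_der {R p fj}.
Arguments cder_ce {R phi dphi}.
Arguments cder_mul {R g h g' h'}.
Arguments cder_cst {R}.
Arguments cder_sum {R I r g g'}.
Arguments cder_eqv {R g a b}.
Arguments cder_ext {R g h g'}.
Arguments cder_prod {R n g g'}.
Arguments pderiv_cder {R p I psi theta m D}.
Arguments ce_norm {R}.
Arguments shiftm0 {R p} theta m.
Arguments cjM {R}.
Arguments cj_sum {R I}.
Arguments cReD {R}.
Arguments cReM {R}.
Arguments cRe_sum {R I}.
Arguments cReRM {R}.
Section FIN.
Variable R : realType.
Local Notation Re := (@complex.Re R).
Local Notation Im := (@complex.Im R).
Local Notation C := R[i].
Local Notation ce := (@ce R).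
Local Notation cder := (@cder R).
Variables (d n : nat).
Variable t : 'I_(d.-1) -> 'M[C]_d.
Variable w : 'I_d -> 'cV[C]_d.
Variable f : 'I_n -> R -> R.
Hypothesis hd : (0 < d)%N.
Hypothesis hherm : forall k, adjmx (t k) = t k.
Hypothesis htr0 : forall k, \tr (t k) = 0.
Hypothesis htr : forall k l, \tr (t k *m t l) = (k == l)%:R.
Hypothesis hon : forall a b, braket (fun r => w a r 0) (fun r => w b r 0) = (a == b)%:R.
Hypothesis heig : forall k a, exists lam : C, t k *m w a = lam *: w a.
Hypothesis hder : forall j x, derivable (f j) x 1.

Local Notation mu := (@mu R d t w).
Local Notation cn := (@cn R d).
Definition ph j (th : 'rV[R]_(d.-1)) a := \sum_k f j (th 0 k) * mu k a.
Definition al j th a := cn * ce (ph j th a).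
Definition V j th (y : 'I_d) := \sum_a al j th a * w a y 0.
Definition gd j (th : 'rV[R]_(d.-1)) m := derive1 (f j) (th 0 m).
Definition V' j th m (y : 'I_d) :=
  \sum_a ('i%C * (gd j th m * mu m a)%:C * al j th a) * w a y 0.

Lemma Vstate j th y : (chanU t (f j) th *m psi_sep w) y 0 = V j th y.
Proof. exact: (psi_state (chanU_act hherm hon heig (f j) th) y). Qed.

Lemma cder_ce_ph (fj : R -> R) (hf : forall x, derivable fj x 1) th m a :
  cder (fun s => ce (\sum_k fj (Defs.shift th m s 0 k) * mu k a))
    ('i%C * (derive1 fj (th 0 m) * mu m a)%:C * ce (\sum_k fj (th 0 k) * mu k a)).
Proof.
have h1 := cder_ce (phi_der hf th m (fun k => mu k a)).
apply: (cder_eqv h1); rewrite shiftm0 //.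
Qed.

Lemma cder_V j th m y :
  cder (fun s => V j (Defs.shift th m s) y) (V' j th m y).
Proof.
apply: cder_sum => a.
have h2 := cder_mul (cder_mul (cder_cst cn) (@cder_ce_ph (f j) (hder j) th m a))
   (cder_cst (w a y 0)).
apply: (cder_eqv h2); rewrite /al /ph /gd; ring.
Qed.

Lemma al_norm j th a : conjc (al j th a) * al j th a = ((d%:R : R)^-1)%:C.
Proof.
rewrite /al cjM.
have -> : conjc cn * conjc (ce (ph j th a)) * (cn * ce (ph j th a))
   = (conjc cn * cn) * (conjc (ce (ph j th a)) * ce (ph j th a)) by ring.
by rewrite ce_norm (cn_norm hd) mulr1.
Qed.

Lemma facts_gen (al0 : 'I_d -> C) (G : R) m :
  (forall a, conjc (al0 a) * al0 a = ((d%:R : R)^-1)%:C) ->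
  [/\ braket (fun y => \sum_a al0 a * w a y 0) (fun y => \sum_a al0 a * w a y 0) = 1,
      braket (fun y => \sum_a ('i%C * (G * mu m a)%:C * al0 a) * w a y 0)
             (fun y => \sum_a al0 a * w a y 0) = 0 &
      braket (fun y => \sum_a ('i%C * (G * mu m a)%:C * al0 a) * w a y 0)
             (fun y => \sum_a ('i%C * (G * mu m a)%:C * al0 a) * w a y 0)
        = (G ^+ 2 / d%:R)%:C].
Proof.
move=> hal.
have [h1 h2 h3] := @state_facts _ _ al0 (fun a => G * mu m a) G hd hal
  (ltac:(by rewrite -mulr_sumr (mu_sum0 hherm htr0 hon heig) mulr0))
  (ltac:(by under eq_bigr do rewrite exprMn; rewrite -mulr_sumr (mu_sum1 hherm htr hon heig) mulr1)).
by rewrite !(braketW hon).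
Qed.

Lemma cj_prod (I : Type) (r : seq I) (F : I -> C) :
  conjc (\prod_(i <- r) F i) = \prod_(i <- r) conjc (F i).
Proof.
elim: r => [|x r ih]; rewrite ?big_nil; first by apply/eqP; rewrite eq_complex /= oppr0 !eqxx.
by rewrite !big_cons cjM ih.
Qed.

Lemma braket_prod (p q : 'I_n -> 'I_d -> C) :
  braket (fun x : {ffun 'I_n -> 'I_d} => \prod_j p j (x j)) (fun x => \prod_j q j (x j))
  = \prod_j braket (p j) (q j).
Proof.
rewrite /braket bigA_distr_bigA /=; apply: eq_bigr => x _.
by rewrite cj_prod -big_split.
Qed.

Lemma braket_suml (I J : finType) (A : J -> I -> C) (B : I -> C) :
  braket (fun x => \sum_j A j x) B = \sum_j braket (A j) B.
Proof.
rewrite /braket; under eq_bigr do rewrite cj_sum big_distrl.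
by rewrite exchange_big.
Qed.

Lemma braket_sumr (I J : finType) (A : I -> C) (B : J -> I -> C) :
  braket A (fun x => \sum_j B j x) = \sum_j braket A (B j).
Proof.
rewrite /braket; under eq_bigr do rewrite big_distrr.
by rewrite exchange_big.
Qed.

Lemma pderiv_par th m : pderiv (out_parallel t f w) th m =
  fun x => \sum_j \prod_j' (if j' == j then V' j' th m (x j') else V j' th (x j')).
Proof.
apply: pderiv_cder => x.
have h := @cder_prod _ _ (fun j s => V j (Defs.shift th m s) (x j))
   (fun j => V' j th m (x j)) (fun j => cder_V j th m (x j)).
apply: (cder_ext _ (cder_eqv h _)).
  by move=> s; rewrite /out_parallel; apply: eq_bigr => j _; rewrite Vstate.
by rewrite shiftm0.
Qed.

Lemma bVV j th : braket (V j th) (V j th) = 1.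
Proof.
have [h1 _ _] := @state_facts _ _ (al j th) (fun _ => 0) 0 hd (al_norm j th)
  (ltac:(by rewrite big1)) (ltac:(by rewrite big1 ?expr0n // => a _; rewrite expr0n)).
by rewrite /V (braketW hon).
Qed.

Lemma bV'V j th m : braket (V' j th m) (V j th) = 0.
Proof. by have [h1 h2 h3] := @facts_gen (al j th) (gd j th m) m (al_norm j th). Qed.

Lemma bV'V' j th m : braket (V' j th m) (V' j th m) = (gd j th m ^+ 2 / d%:R)%:C.
Proof. by have [h1 h2 h3] := @facts_gen (al j th) (gd j th m) m (al_norm j th). Qed.

Lemma qfi_par th m : sld_qfi (out_parallel t f w) th m m
   = 4 * \sum_j (gd j th m ^+ 2 / d%:R).
Proof.
rewrite mxE pderiv_par.
pose hh j j' := if j' == j then V' j' th m else V j' th.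
have eD : (fun x : {ffun 'I_n -> 'I_d} => \sum_j \prod_j'
     (if j' == j then V' j' th m (x j') else V j' th (x j')))
   = (fun x => \sum_j \prod_j' hh j j' (x j')).
  apply/funext => x; apply: eq_bigr => j _; apply: eq_bigr => j' _.
  by rewrite /hh; case: eqP.
have eP : out_parallel t f w th = (fun x => \prod_j V j th (x j)).
  apply/funext => x; rewrite /out_parallel; apply: eq_bigr => j _; exact: Vstate.
rewrite eD eP.
have -> : braket (fun x : {ffun 'I_n -> 'I_d} => \sum_j \prod_j' hh j j' (x j'))
      (fun x => \prod_j V j th (x j)) = 0.
  rewrite braket_suml big1 // => j _; rewrite (braket_prod (fun j' => hh j j') (fun j => V j th)) (bigD1 j) //=.
  by rewrite /hh eqxx bV'V mul0r.
rewrite mul0r subr0 braket_suml.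
have -> : \sum_j braket (fun x : {ffun 'I_n -> 'I_d} => \prod_j' hh j j' (x j'))
     (fun x => \sum_l \prod_j' hh l j' (x j'))
   = \sum_j (gd j th m ^+ 2 / d%:R)%:C.
  apply: eq_bigr => j _; rewrite braket_sumr (bigD1 j) //= big1 ?addr0.
    rewrite braket_prod (bigD1 j) //= big1 ?mulr1; first by rewrite /hh eqxx bV'V'.
    by move=> j' /negbTE hj; rewrite /hh hj bVV.
  move=> l /negbTE hl; rewrite braket_prod (bigD1 j) //=.
  by rewrite /hh eqxx eq_sym hl bV'V mul0r.
by rewrite -rmorph_sum.
Qed.

Lemma prod_act (I : Type) (r : seq I) (M : I -> 'M[C]_d) (ga : I -> 'I_d -> C) a :
  (forall j, M j *m w a = ga j a *: w a) ->
  (\prod_(j <- r) M j) *m w a = (\prod_(j <- r) ga j a) *: w a.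
Proof.
move=> h; elim: r => [|x r ih].
  by rewrite !big_nil -idmxE mul1mx scale1r.
by rewrite !big_cons -mulmxE -mulmxA ih -scalemxAr h scalerA mulrC.
Qed.

Definition P th a := \prod_(j < n) ce (ph (rev_ord j) th a).
Definition als th a := cn * P th a.
Definition Vs th (y : 'I_d) := \sum_a als th a * w a y 0.
Definition gs th m := \sum_(j < n) gd (rev_ord j) th m.
Definition Vs' th m (y : 'I_d) :=
  \sum_a ('i%C * (gs th m * mu m a)%:C * als th a) * w a y 0.

Lemma seq_state th y : out_sequential t f w th y = Vs th y.
Proof.
have h a : (\prod_(j < n) chanU t (f (rev_ord j)) th) *m w a
    = (\prod_(j < n) ce (ph (rev_ord j) th a)) *: w a.
  exact: (@prod_act _ _ (fun j => chanU t (f (rev_ord j)) th) (fun j a => ce (ph (rev_ord j) th a)) a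
     (fun j => chanU_act hherm hon heig (f (rev_ord j)) th a)).
exact: (psi_state h y).
Qed.

Lemma cder_P th m a :
  cder (fun s => P (Defs.shift th m s) a) ('i%C * (gs th m * mu m a)%:C * P th a).
Proof.
have h := @cder_prod _ _ (fun j s => ce (ph (rev_ord j) (Defs.shift th m s) a))
   (fun j => 'i%C * (gd (rev_ord j) th m * mu m a)%:C * ce (ph (rev_ord j) th a))
   (fun j => @cder_ce_ph (f (rev_ord j)) (hder (rev_ord j)) th m a).
apply: (cder_eqv h); rewrite shiftm0.
transitivity (\sum_(j < n) ('i%C * (gd (rev_ord j) th m * mu m a)%:C) * P th a).
  apply: eq_bigr => j _; rewrite (bigD1 j) //= eqxx /P [in RHS](bigD1 j) //= !mulrA.
  congr (_ * _); apply: eq_bigr => j' /negbTE -> //.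
rewrite -big_distrl /= -big_distrr /= -rmorph_sum -mulr_suml.
by [].
Qed.

Lemma cder_Vs th m y : cder (fun s => Vs (Defs.shift th m s) y) (Vs' th m y).
Proof.
apply: cder_sum => a.
have h2 := cder_mul (cder_mul (cder_cst cn) (cder_P th m a)) (cder_cst (w a y 0)).
apply: (cder_eqv h2); rewrite /als; ring.
Qed.

Lemma pderiv_seq th m : pderiv (out_sequential t f w) th m = Vs' th m.
Proof.
apply: pderiv_cder => y.
apply: (cder_ext _ (cder_Vs th m y)) => s.
by rewrite seq_state.
Qed.

Lemma als_norm th a : conjc (als th a) * als th a = ((d%:R : R)^-1)%:C.
Proof.
rewrite /als cjM.
have -> : conjc cn * conjc (P th a) * (cn * P th a)
   = (conjc cn * cn) * (conjc (P th a) * P th a) by ring.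
rewrite (cn_norm hd) /P cj_prod -big_split /= big1 ?mulr1 // => j _.
exact: ce_norm.
Qed.

Lemma qfi_seq th m : sld_qfi (out_sequential t f w) th m m
   = 4 * (gs th m ^+ 2 / d%:R).
Proof.
rewrite mxE pderiv_seq.
have eP : out_sequential t f w th = Vs th by apply/funext => y; exact: seq_state.
rewrite eP.
have [h1 h2 h3] := @facts_gen (als th) (gs th m) m (als_norm th).
by rewrite /Vs /Vs' h2 h3 mul0r subr0.
Qed.

End FIN.

Theorem proposition4p4 (R : realType) (d n : nat)
    (t : 'I_(d.-1) -> 'M[R[i]]_d) (w : 'I_d -> 'cV[R[i]]_d)
    (f : 'I_n -> R -> R) (Theta : set 'rV[R]_(d.-1)) :
  (0 < d)%N ->
  (forall k, adjmx (t k) = t k) ->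
  (forall k, \tr (t k) = 0) ->
  (forall k l, \tr (t k *m t l) = (k == l)%:R) ->
  (forall k l, t k *m t l = t l *m t k) ->
  (forall a b, braket (fun r => w a r 0) (fun r => w b r 0) = (a == b)%:R) ->
  (forall k a, exists lam : R[i], t k *m w a = lam *: w a) ->
  (forall j x, derivable (f j) x 1) ->
  (forall j x, 0 < derive1 (f j) x) ->
  (forall theta, Theta theta -> forall k,
      0 <= \sum_(j < n) f j (theta 0 k) <= pi) ->
  forall theta, Theta theta ->
    \tr (sld_qfi (out_parallel t f w) theta)
      = 4 / d%:R * \sum_(k < d.-1) \sum_(j < n) (derive1 (f j) (theta 0 k)) ^+ 2
    /\
    \tr (sld_qfi (out_sequential t f w) theta)
      = 4 / d%:R * \sum_(k < d.-1) (\sum_(j < n) derive1 (f j) (theta 0 k)) ^+ 2.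
Proof.
move=> hd hherm htr0 htr _ hon heig hder _ _ theta _; split.
- rewrite /mxtrace.
  under eq_bigr do rewrite (@qfi_par _ _ _ _ _ _ hd hherm htr0 htr hon heig hder).
  rewrite -mulr_sumr.
  under eq_bigr do rewrite -mulr_suml.
  rewrite -mulr_suml /gd; ring.
- rewrite /mxtrace.
  under eq_bigr do rewrite (@qfi_seq _ _ _ _ _ _ hd hherm htr0 htr hon heig hder).
  rewrite -mulr_sumr -mulr_suml /gs /gd.
  have er x : \sum_(j < n) derive1 (f (rev_ord j)) x = \sum_(j < n) derive1 (f j) x.
    by rewrite [RHS](reindex_inj rev_ord_inj).
  under eq_bigr do rewrite er.
  ring.
Qed.
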